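(* For all integers $n,d,k,p\ge0$, $$P_p(n,\omega^d\cdot k)=\begin{cases}0 & d=0,\ n>k\\ 1 & n=0,\ p=0\\ 0 & n=0,\ p\ge1\\ \binom{k}{n} & d=0,\ 1\le n\le k,\ p=0\\ 0 & d=0,\ 1\le n\le k,\ p\ge1\\ k^n & d=1,\ n\ge1,\ n=p\\ 0 & d=1,\ n\ge1,\ n\ne p\\ 0 & d\ge2,\ n\ge1,\ p=0\\ \displaystyle k\sum_{j=1}^{n}\sum_{i=0}^{p-1}\binom{p-1}{i}P_i(j,\omega^{d-1})\,P_{p-1-i}(n-j,\omega^d\cdot k) & d\ge2,\ n\ge1,\ p\ge1.\end{cases}$$
   Context: Fix integers $n,d,k\ge0$. Every $\beta<\omega^d\cdot k$ is uniquely written $\omega^d b+\omega^{d-1}a_{d-1}+\cdots+a_0$ with $0\le b<k$, $a_j\in\mathbb{N}$. A coloring rule (CR) on $\binom{\omega^d\cdot k}{n}$ is a pair $(\mathcal{Y},\preceq)$ with $\mathcal{Y}:\{1,\dots,n\}\to\{0,\dots,k-1\}$ and $\preceq$ a total preorder on $I=\{(i,j):1\le i\le n,0\le j<d\}$ (write $\equiv$ for the induced equivalence and $\prec$ for the strict part) such that: (1) if $d\ge1$, $(i,0)\prec(i',0)$ for $i<i'$; if $d=0$, $\mathcal{Y}(i)<\mathcal{Y}(i')$ for $i<i'$; (2) $(i,j)\equiv(i',j)$ for some $j$ implies $\mathcal{Y}(i)=\mathcal{Y}(i')$; (3) $(i,j)\prec(i,j')$ for $j>j'$; (4) $(i,j)\equiv(i',j')$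 implies $j=j'$; (5) for $j>0$, $(i,j)\not\equiv(i',j)$ implies $(i,j-1)\not\equiv(i',j-1)$. The size of a CR is the number of $\equiv$-classes of $I$. $P_p(n,\omega^d\cdot k)$ is the number of CRs of size $p$ on $\binom{\omega^d\cdot k}{n}$, and $P_p(n,\omega^{d})$ means $P_p(n,\omega^{d}\cdot1)$. *)

(* Defs.v *)
From mathcomp Require Import all_boot.
Set Implicit Arguments. Unset Strict Implicit. Unset Printing Implicit Defensive.

(* Index set I = {1..n} x {0..d-1}; the index i in {1..n} is represented by
   the ordinal i-1 : 'I_n (order preserved).  Colours b in {0..k-1} : 'I_k. *)
Definition CRidx (n d : nat) := ('I_n * 'I_d)%type.

(* A candidate coloring rule: the map Y and the (boolean) relation <= on I,
   given as a finite function on pairs. *)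
Definition CRcand (n d k : nat) :=
  ({ffun 'I_n -> 'I_k} * {ffun CRidx n d * CRidx n d -> bool})%type.

Section CR.
Variables n d k : nat.
Implicit Types c : CRcand n d k.

Definition cr_le c (x y : CRidx n d) : bool := c.2 (x, y).
Definition cr_eqv c (x y : CRidx n d) : bool := cr_le c x y && cr_le c y x.
Definition cr_lt c (x y : CRidx n d) : bool := cr_le c x y && ~~ cr_le c y x.

Definition total_preorder c : bool :=
  [forall x, forall y, cr_le c x y || cr_le c y x] &&
  [forall x, forall y, forall z, cr_le c x y ==> cr_le c y z ==> cr_le c x z].

Definition cr_cond1 c : bool :=
  if 0 < d then
    [forall i : 'I_n, forall i' : 'I_n, forall j : 'I_d,
       (val j == 0) ==> (i < i') ==> cr_lt c (i, j) (i', j)]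
  else
    [forall i : 'I_n, forall i' : 'I_n, (i < i') ==> (c.1 i < c.1 i')].

Definition cr_cond2 c : bool :=
  [forall i : 'I_n, forall i' : 'I_n, forall j : 'I_d,
     cr_eqv c (i, j) (i', j) ==> (c.1 i == c.1 i')].

Definition cr_cond3 c : bool :=
  [forall i : 'I_n, forall j : 'I_d, forall j' : 'I_d,
     (j' < j) ==> cr_lt c (i, j) (i, j')].

Definition cr_cond4 c : bool :=
  [forall i : 'I_n, forall i' : 'I_n, forall j : 'I_d, forall j' : 'I_d,
     cr_eqv c (i, j) (i', j') ==> (j == j')].

Definition cr_cond5 c : bool :=
  [forall i : 'I_n, forall i' : 'I_n, forall j : 'I_d, forall j' : 'I_d,
     (val j == (val j').+1) ==> ~~ cr_eqv c (i, j) (i', j) ==>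
       ~~ cr_eqv c (i, j') (i', j')].

Definition is_CR c : bool :=
  [&& total_preorder c, cr_cond1 c, cr_cond2 c, cr_cond3 c, cr_cond4 c
    & cr_cond5 c].

Definition cr_size c : nat :=
  #|[set [set y | cr_eqv c x y] | x : CRidx n d]|.

End CR.

Definition Pcount (p n d k : nat) : nat :=
  #|[set c : CRcand n d k | is_CR c && (cr_size c == p)]|.

(* Main.v *)
Require Import Defs.
From mathcomp Require Import all_boot zify.
Set Implicit Arguments. Unset Strict Implicit. Unset Printing Implicit Defensive.

Lemma enum_set_ord m (A : {pred 'I_m}) : enum A = [seq x <- enum 'I_m | x \in A].
Proof. by rewrite {2}/enum_mem filter_predT. Qed.

Lemma sorted_enum_ord m (A : {pred 'I_m}) : sorted ltn (map val (enum A)).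
Proof.
rewrite enum_set_ord sorted_map; apply: sorted_filter.
  by move=> x y z /= ; apply: ltn_trans.
by rewrite -sorted_map val_enum_ord iota_ltn_sorted.
Qed.

Lemma enum_val_ltn m (A : {pred 'I_m}) (a b : 'I_#|A|) :
  (enum_val a < enum_val b) = (a < b).
Proof.
have H : forall a b : 'I_#|A|, a < b -> enum_val a < enum_val b.
  move=> a' b' ab; have x0 := enum_val a'.
  rewrite (enum_val_nth x0 a') (enum_val_nth x0 b').
  have sz : size (enum A) = #|A| by rewrite cardE.
  rewrite -(nth_map x0 (val x0) val) ?sz //.
  rewrite -(nth_map x0 (val x0) val) ?sz //.
  apply: (sorted_ltn_nth ltn_trans) => //; first exact: sorted_enum_ord.
    by rewrite inE size_map sz.
    by rewrite inE size_map sz.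
apply/idP/idP; last exact: H.
case: (ltngtP a b) => // [ba|/val_inj ->]; last by rewrite ltnn.
by move/(ltn_trans (H _ _ ba)); rewrite ltnn.
Qed.

Lemma inc_unique n (f g : nat -> nat) :
  (forall i j, i < j < n -> f i < f j) -> (forall i j, i < j < n -> g i < g j) ->
  (forall i, i < n -> exists2 j, j < n & f i = g j) ->
  (forall i, i < n -> exists2 j, j < n & g i = f j) ->
  forall i, i < n -> f i = g i.
Proof.
move=> fi gi fg gf.
have wk : forall h : nat -> nat, (forall i j, i < j < n -> h i < h j) ->
    forall i j, i <= j < n -> h i <= h j.
  move=> h hi i j /andP[]; rewrite leq_eqVlt => /orP[/eqP -> //|ij jn].
  by apply: ltnW; apply: hi; rewrite ij jn.
elim/ltn_ind => i IH ilt.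
have [j jn fij] := fg i ilt.
have [j' jn' gij] := gf i ilt.
have ij : i <= j.
  rewrite leqNgt; apply/negP => ji.
  have := fi j i; rewrite ji ilt => /(_ isT).
  by rewrite fij -(IH j ji (ltn_trans ji ilt)) ltnn.
have ij' : i <= j'.
  rewrite leqNgt; apply/negP => ji.
  have := gi j' i; rewrite ji ilt => /(_ isT).
  by rewrite gij (IH j' ji (ltn_trans ji ilt)) ltnn.
have h1 := wk g gi i j; rewrite ij jn /= in h1.
have h2 := wk f fi i j'; rewrite ij' jn' /= in h2.
apply/eqP; rewrite eqn_leq fij (h1 isT) -fij /=.
by rewrite -gij in h2; rewrite (h2 isT).
Qed.

Lemma surj_unique_half (X : Type) p (f g : X -> nat) :
  (forall x, f x < p) -> (forall x, g x < p) ->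
  (forall v, v < p -> exists x, f x = v) -> (forall v, v < p -> exists x, g x = v) ->
  (forall x y, (f x <= f y) = (g x <= g y)) ->
  forall v, (forall w, w < v -> (forall x, f x = w -> g x = w) /\ (forall x, g x = w -> f x = w)) ->
  forall x, f x = v -> g x = v.
Proof.
move=> fp gp fs gs fg v IH x fx.
apply/eqP; rewrite eqn_leq; apply/andP; split; last first.
  rewrite leqNgt; apply/negP => gxv.
  have := (IH (g x) gxv).2 x erefl; rewrite fx => E.
  by rewrite E ltnn in gxv.
rewrite leqNgt; apply/negP => vgx.
have [y gy] := gs v (ltn_trans vgx (gp x)).
have fyx : f y < f x.
  by rewrite ltnNge fg -ltnNge gy.
rewrite fx in fyx.
have := (IH (f y) fyx).1 y erefl; rewrite gy => E.
by rewrite E ltnn in fyx.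
Qed.

Lemma surj_unique (X : Type) p (f g : X -> nat) :
  (forall x, f x < p) -> (forall x, g x < p) ->
  (forall v, v < p -> exists x, f x = v) -> (forall v, v < p -> exists x, g x = v) ->
  (forall x y, (f x <= f y) = (g x <= g y)) -> forall x, f x = g x.
Proof.
move=> fp gp fs gs fg.
suff H : forall v, (forall x, f x = v -> g x = v) /\ (forall x, g x = v -> f x = v).
  by move=> x; rewrite ((H (f x)).1 x erefl).
elim/ltn_ind => v IH; split.
  exact: (surj_unique_half fp gp fs gs fg IH).
apply: (surj_unique_half gp fp gs fs).
- by move=> x y; rewrite fg.
- by move=> w /IH [] ? ?; split.
Qed.

Lemma card_imset_kernel (T U V : finType) (f : T -> U) (g : T -> V) :
  (forall x y, (f x == f y) = (g x == g y)) -> #|f @: T| = #|g @: T|.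
Proof.
move=> fg.
case: (pickP (@predT T)) => [x0 _|T0]; last first.
  have -> : f @: T = set0.
    apply/setP => u; rewrite in_set0; apply/negP => /imsetP [x _].
    by have := T0 x.
  have -> : g @: T = set0.
    apply/setP => u; rewrite in_set0; apply/negP => /imsetP [x _].
    by have := T0 x.
  by rewrite !cards0.
pose phi u := g (odflt x0 [pick x | f x == u]).
have phif : forall x, phi (f x) = g x.
  move=> x; rewrite /phi; case: pickP => [y /eqP fy|] /=.
    by apply/eqP; rewrite -fg fy.
  by move/(_ x); rewrite eqxx.
have -> : g @: T = phi @: (f @: T).
  rewrite -imset_comp; apply: eq_imset => x /=; by rewrite phif.
rewrite card_in_imset // => u u' /imsetP[x _ ->] /imsetP[x' _ ->].
by rewrite !phif => /eqP; rewrite -fg => /eqP.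
Qed.

Section Rank.
Variable X : finType.
Variable le : rel X.
Hypothesis le_total : forall x y, le x y || le y x.
Hypothesis le_trans : forall x y z, le x y -> le y z -> le x z.

Lemma le_refl x : le x x.
Proof. by have := le_total x x; rewrite orbb. Qed.

Definition eqvR x y := le x y && le y x.
Definition clsR x := [set z | eqvR x z].
Definition ClR := [set clsR x | x : X].
Definition rkR x := #|[set clsR y | y in [set y | le y x && ~~ le x y]]|.

Lemma clsR_eq x y : (clsR x == clsR y) = eqvR x y.
Proof.
apply/eqP/idP => [E|/andP[xy yx]].
  have : y \in clsR y by rewrite inE /eqvR le_refl.
  by rewrite -E inE.
apply/setP => z; rewrite !inE /eqvR.
apply/andP/andP => [[xz zx]|[yz zy]]; split.
- exact: le_trans yx xz.
- exact: le_trans zx xy.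
- exact: le_trans xy yz.
- exact: le_trans zy yx.
Qed.

Lemma rkR_sub x y : le x y -> rkR x <= rkR y.
Proof.
move=> xy; apply: subset_leq_card; apply: imsetS.
apply/subsetP => z; rewrite !inE => /andP[zx xz]; rewrite (le_trans zx xy) /=.
by apply/negP => yz; move/negP: xz; apply; apply: le_trans xy yz.
Qed.

Lemma rkR_strict x y : le x y -> ~~ le y x -> rkR x < rkR y.
Proof.
move=> xy yx; apply: proper_card; rewrite properE; apply/andP; split.
  apply: imsetS; apply/subsetP => z; rewrite !inE => /andP[zx xz].
  rewrite (le_trans zx xy) /=.
  by apply/negP => yz; move/negP: xz; apply; apply: le_trans xy yz.
apply/subsetPn; exists (clsR x).
  by apply/imsetP; exists x => //; rewrite inE xy yx.
apply/imsetP => -[z]; rewrite inE => /andP[zx xz] /eqP.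
by rewrite clsR_eq /eqvR (negbTE xz).
Qed.

Lemma rkR_le x y : le x y = (rkR x <= rkR y).
Proof.
apply/idP/idP => [/rkR_sub //|].
case xy: (le x y) => //.
have yx : le y x by have := le_total x y; rewrite xy.
by rewrite leqNgt (rkR_strict yx) ?xy.
Qed.

Lemma rkR_eq x y : (rkR x == rkR y) = eqvR x y.
Proof. by rewrite eqn_leq /eqvR -!rkR_le. Qed.

Lemma rkR_lt x : rkR x < #|ClR|.
Proof.
apply: proper_card; rewrite properE; apply/andP; split.
  by apply: imsetS; apply/subsetP.
apply/subsetPn; exists (clsR x); first by apply/imsetP; exists x.
apply/imsetP => -[z]; rewrite inE => /andP[zx xz] /eqP.
by rewrite clsR_eq /eqvR (negbTE xz).
Qed.

Lemma rkR_surj v : v < #|ClR| -> exists x, rkR x = v.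
Proof.
move=> vlt.
pose g x : 'I_#|ClR| := Ordinal (rkR_lt x).
have K : #|clsR @: X| = #|g @: X|.
  by apply: card_imset_kernel => x y; rewrite clsR_eq -rkR_eq.
have : g @: X == setT.
  rewrite eqEcard subsetT cardsT card_ord -K /ClR leqnn.
  by [].
move/eqP => E.
have : Ordinal vlt \in g @: X by rewrite E inE.
by case/imsetP => x _ /(congr1 val) /= ->; exists x.
Qed.

End Rank.

Definition rowd d k p := option ('I_k * {ffun 'I_d -> 'I_p}).
Definition Hs d k p := {ffun 'I_p -> rowd d k p}.

Definition selfok d k p (t : 'I_p) (x : rowd d k p) : bool :=
  if x is Some (c, P) then
    [forall l : 'I_d, forall l' : 'I_d,
       ((val l == 0) ==> (P l == t)) && ((l' < l) ==> (P l < P l'))]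
  else true.

Definition pairok d k p (x y : rowd d k p) : bool :=
  match x, y with
  | Some (c, P), Some (c', P') =>
    [forall l : 'I_d, forall l' : 'I_d,
       [&& (P l == P' l') ==> (l == l'),
           (P l == P' l) ==> (c == c') &
           ((val l == (val l').+1) && (P l' == P' l')) ==> (P l == P' l)]]
  | _, _ => true
  end.

Definition covers d k p (h : Hs d k p) (u : 'I_p) : bool :=
  [exists t, exists l : 'I_d, if h t is Some (c, P) then P l == u else false].

Definition good d k p (h : Hs d k p) : bool :=
  [&& [forall t, selfok t (h t)], [forall t, forall t', pairok (h t) (h t')]
    & [forall u, covers h u]].

Definition nrows d k p (h : Hs d k p) := #|[set t | h t != None]|.
Definition NN n d k p := #|[set h : Hs d k p | good h && (nrows h == n)]|.

Section Good.
Variables d k p : nat.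
Implicit Types h : Hs d k p.

Lemma good0 h t c P l : good h -> h t = Some (c, P) -> val l = 0 -> P l = t.
Proof.
case/and3P => /forallP /(_ t) + _ _ E l0; rewrite E /=.
by move/forallP/(_ l)/forallP/(_ l)/andP => [/implyP/(_ (introT eqP l0))/eqP].
Qed.

Lemma good3 h t c P (l l' : 'I_d) : good h -> h t = Some (c, P) -> l' < l -> P l < P l'.
Proof.
case/and3P => /forallP /(_ t) + _ _ E ll; rewrite E /=.
by move/forallP/(_ l)/forallP/(_ l')/andP => [_ /implyP/(_ ll)].
Qed.

Lemma goodpair h t c P t' c' P' : good h -> h t = Some (c, P) -> h t' = Some (c', P') ->
  forall l l' : 'I_d,
       [&& (P l == P' l') ==> (l == l'),
           (P l == P' l) ==> (c == c') &
           ((val l == (val l').+1) && (P l' == P' l')) ==> (P l == P' l)].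
Proof.
case/and3P => _ /forallP /(_ t) /forallP /(_ t') + _ E E'; rewrite E E' /=.
by move=> H l l'; move/forallP: H => /(_ l) /forallP /(_ l').
Qed.

Lemma good4 h t c P t' c' P' (l l' : 'I_d) : good h -> h t = Some (c, P) -> h t' = Some (c', P') ->
  P l = P' l' -> l = l'.
Proof.
move=> g E E' e; have /and3P[/implyP H _ _] := goodpair g E E' l l'.
by apply/eqP; apply: H; apply/eqP.
Qed.

Lemma good2 h t c P t' c' P' (l : 'I_d) : good h -> h t = Some (c, P) -> h t' = Some (c', P') ->
  P l = P' l -> c = c'.
Proof.
move=> g E E' e; have /and3P[_ /implyP H _] := goodpair g E E' l l.
by apply/eqP; apply: H; apply/eqP.
Qed.

Lemma good5 h t c P t' c' P' (l l' : 'I_d) : good h -> h t = Some (c, P) -> h t' = Some (c', P') ->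
  val l = (val l').+1 -> P l' = P' l' -> P l = P' l.
Proof.
move=> g E E' e1 e2; have /and3P[_ _ /implyP H] := goodpair g E E' l l'.
by apply/eqP; apply: H; rewrite e1 e2 !eqxx.
Qed.

Lemma goodS h u : good h -> exists t c P l, h t = Some (c, P) /\ P l = u.
Proof.
case/and3P => _ _ /forallP /(_ u) /existsP [t] /existsP [l].
case E: (h t) => [[c P]|] // /eqP e.
by exists t, c, P, l.
Qed.

Lemma goodUp h t c P t' c' P' (l l' : 'I_d) : good h -> h t = Some (c, P) -> h t' = Some (c', P') ->
  val l' <= val l -> P l' = P' l' -> P l = P' l.
Proof.
move=> g E E' ll' e.
have [m Hm] : exists m, val l = val l' + m by exists (val l - val l'); lia.
elim: m l Hm {ll'} => [|m IH] l Hm.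
  by have -> : l = l' by apply: val_inj; rewrite Hm addn0.
have lt1 : val l' + m < d by have := ltn_ord l; move: Hm => /= Hm; lia.
apply: (good5 (l' := Ordinal lt1) g E E'); first by rewrite /= Hm addnS.
by apply: (IH (Ordinal lt1)).
Qed.

Lemma goodI h :
  (forall t c P l, h t = Some (c, P) -> val l = 0 -> P l = t) ->
  (forall t c P (l l' : 'I_d), h t = Some (c, P) -> l' < l -> P l < P l') ->
  (forall t c P t' c' P' (l l' : 'I_d), h t = Some (c, P) -> h t' = Some (c', P') ->
      P l = P' l' -> l = l') ->
  (forall t c P t' c' P' (l : 'I_d), h t = Some (c, P) -> h t' = Some (c', P') ->
      P l = P' l -> c = c') ->
  (forall t c P t' c' P' (l l' : 'I_d), h t = Some (c, P) -> h t' = Some (c', P') ->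
      val l = (val l').+1 -> P l' = P' l' -> P l = P' l) ->
  (forall u, exists t c P l, h t = Some (c, P) /\ P l = u) ->
  good h.
Proof.
move=> H0 H3 H4 H2 H5 HS; apply/and3P; split.
- apply/forallP => t; case E: (h t) => [[c P]|] //=.
  apply/forallP => l; apply/forallP => l'; apply/andP; split.
    by apply/implyP => /eqP l0; apply/eqP; apply: H0 E l0.
  by apply/implyP => ll; apply: H3 E ll.
- apply/forallP => t; apply/forallP => t'.
  case E: (h t) => [[c P]|] //=; case E': (h t') => [[c' P']|] //=.
  apply/forallP => l; apply/forallP => l'; apply/and3P; split.
  + by apply/implyP => /eqP e; apply/eqP; apply: H4 E E' e.
  + by apply/implyP => /eqP e; apply/eqP; apply: H2 E E' e.
  + by apply/implyP => /andP[/eqP e1 /eqP e2]; apply/eqP; apply: H5 E E' e1 e2.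
- apply/forallP => u; have [t [c [P [l [E e]]]]] := HS u.
  by apply/existsP; exists t; apply/existsP; exists l; rewrite E e.
Qed.

End Good.

Section CRfacts.
Variables n D k : nat.
Local Notation d := D.+1.
Implicit Types c : CRcand n d k.

Lemma CR_total c : is_CR c -> forall x y, cr_le c x y || cr_le c y x.
Proof. by case/and3P => /andP[/forallP H _] _ _ x y; move/forallP: (H x) => /(_ y). Qed.

Lemma CR_trans c : is_CR c -> forall x y z, cr_le c x y -> cr_le c y z -> cr_le c x z.
Proof.
case/and3P => /andP[_ /forallP H] _ _ x y z.
by move/forallP: (H x) => /(_ y) /forallP /(_ z) /implyP H1 /H1 /implyP.
Qed.

Definition rk c x := rkR (cr_le c) x.

Lemma rk_le c x y : is_CR c -> cr_le c x y = (rk c x <= rk c y).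
Proof. by move=> H; apply: rkR_le; [apply: CR_total|apply: CR_trans]. Qed.

Lemma rk_eqv c x y : is_CR c -> cr_eqv c x y = (rk c x == rk c y).
Proof. by move=> H; rewrite /cr_eqv eqn_leq -!rk_le. Qed.

Lemma rk_lt c x y : is_CR c -> cr_lt c x y = (rk c x < rk c y).
Proof. by move=> H; rewrite /cr_lt !rk_le // -ltnNge andb_idl // => /ltnW. Qed.

Lemma rk_ltp c x : is_CR c -> rk c x < cr_size c.
Proof. by move=> H; apply: rkR_lt; [apply: CR_total|apply: CR_trans]. Qed.

Lemma rk_surj c v : is_CR c -> v < cr_size c -> exists x, rk c x = v.
Proof. by move=> H; apply: rkR_surj; [apply: CR_total|apply: CR_trans]. Qed.

Lemma cr1 c : is_CR c -> forall i i' : 'I_n, i < i' -> rk c (i, ord0) < rk c (i', ord0).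
Proof.
move=> H; have := H; case/and3P => _ + _; rewrite /cr_cond1 /= => /forallP H1 i i' ii.
move/forallP: (H1 i) => /(_ i') /forallP /(_ ord0) /implyP /(_ isT) /implyP /(_ ii).
by rewrite rk_lt.
Qed.

Lemma cr1_inj c : is_CR c -> forall i i' : 'I_n, rk c (i, ord0) = rk c (i', ord0) -> i = i'.
Proof.
move=> H i i' e; case: (ltngtP i i') => [ii|ii|/val_inj //].
  by have := cr1 H ii; rewrite e ltnn.
by have := cr1 H ii; rewrite e ltnn.
Qed.

Lemma cr2 c (i i' : 'I_n) (j : 'I_d) : is_CR c -> rk c (i, j) = rk c (i', j) -> c.1 i = c.1 i'.
Proof.
move=> H e; have := H; case/and4P => _ _ /forallP H2 _.
move/forallP: (H2 i) => /(_ i') /forallP /(_ j) /implyP; rewrite rk_eqv // e eqxx.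
by move/(_ isT)/eqP.
Qed.

Lemma cr3 c (i : 'I_n) (j j' : 'I_d) : is_CR c -> j' < j -> rk c (i, j) < rk c (i, j').
Proof.
move=> H jj; have := H; case/and4P => _ _ _ /andP[/forallP H3 _].
move/forallP: (H3 i) => /(_ j) /forallP /(_ j') /implyP /(_ jj).
by rewrite rk_lt.
Qed.

Lemma cr4 c (i i' : 'I_n) (j j' : 'I_d) : is_CR c -> rk c (i, j) = rk c (i', j') -> j = j'.
Proof.
move=> H e; have := H; case/and4P => _ _ _ /and3P[_ /forallP H4 _].
move/forallP: (H4 i) => /(_ i') /forallP /(_ j) /forallP /(_ j') /implyP.
by rewrite rk_eqv // e eqxx => /(_ isT) /eqP.
Qed.

Lemma cr5 c (i i' : 'I_n) (j j' : 'I_d) : is_CR c -> val j = (val j').+1 ->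
  rk c (i, j') = rk c (i', j') -> rk c (i, j) = rk c (i', j).
Proof.
move=> H e1 e2; have := H; case/and4P => _ _ _ /and3P[_ _ /forallP H5].
move/forallP: (H5 i) => /(_ i') /forallP /(_ j) /forallP /(_ j') /implyP.
rewrite e1 eqxx => /(_ isT) /implyP; rewrite !rk_eqv // e2 eqxx.
by case: eqP => // _ /(_ isT).
Qed.

End CRfacts.

Section Delta.
Variables n D k p : nat.
Local Notation d := D.+1.
Implicit Types c : CRcand n d k.

Definition Delta c : Hs d k p :=
  [ffun t : 'I_p => if [pick i : 'I_n | rk c (i, ord0) == t] is Some i
     then Some (c.1 i, [ffun l => insubd t (rk c (i, l))]) else None].

Lemma Delta_some c i (t : 'I_p) : is_CR c -> rk c (i, ord0) = t ->
  Delta c t = Some (c.1 i, [ffun l => insubd t (rk c (i, l))]).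
Proof.
move=> H e; rewrite /Delta ffunE; case: pickP => [i' /eqP e'|/(_ i)]; last by rewrite e eqxx.
by have -> : i' = i by apply: (cr1_inj H); rewrite e e'.
Qed.

Lemma Delta_inv c t cc P : Delta c t = Some (cc, P) ->
  exists i, [/\ rk c (i, ord0) = t, cc = c.1 i & P = [ffun l => insubd t (rk c (i, l))]].
Proof.
rewrite /Delta ffunE; case: pickP => [i /eqP e|] // [] <- <-.
by exists i.
Qed.

Lemma Delta_none c (t : 'I_p) : (forall i, rk c (i, ord0) != t) -> Delta c t = None.
Proof.
move=> H; rewrite /Delta ffunE; case: pickP => [i|] //.
by rewrite (negbTE (H i)).
Qed.

Lemma val_insubd_lt (t : 'I_p) v : v < p -> val (insubd t v) = v.
Proof. by move=> vp; rewrite val_insubd vp. Qed.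

Lemma Delta_good c : is_CR c -> cr_size c = p -> good (Delta c) && (nrows (Delta c) == n).
Proof.
move=> H hp.
have rkp x : rk c x < p by rewrite -hp rk_ltp.
have iv : forall (t : 'I_p) x, val (insubd t (rk c x)) = rk c x.
  by move=> t x; rewrite val_insubd_lt.
apply/andP; split.
  apply: goodI.
  - move=> t cc P l /Delta_inv [i [e1 e2 ->]] l0.
    have -> : l = ord0 by apply: val_inj.
    by apply: val_inj; rewrite ffunE iv.
  - move=> t cc P l l' /Delta_inv [i [e1 e2 ->]] ll.
    by rewrite !ffunE /= !iv; apply: cr3.
  - move=> t cc P t' cc' P' l l' /Delta_inv [i [_ _ ->]] /Delta_inv [i' [_ _ ->]].
    rewrite !ffunE => /(congr1 val); rewrite !iv.
    exact: cr4.
  - move=> t cc P t' cc' P' l /Delta_inv [i [_ -> ->]] /Delta_inv [i' [_ -> ->]].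
    rewrite !ffunE => /(congr1 val); rewrite !iv.
    exact: cr2.
  - move=> t cc P t' cc' P' l l' /Delta_inv [i [_ _ ->]] /Delta_inv [i' [_ _ ->]] e.
    rewrite !ffunE => /(congr1 val); rewrite !iv => e2.
    by apply: val_inj; rewrite !iv; apply: (cr5 H e).
  - move=> u; have [[i l] e] : exists x, rk c x = u by apply: rk_surj; rewrite // hp.
    pose t : 'I_p := Ordinal (rkp (i, ord0)).
    exists t, (c.1 i), [ffun l => insubd t (rk c (i, l))], l; split.
      exact: Delta_some.
    by apply: val_inj; rewrite ffunE iv.
pose f (i : 'I_n) : 'I_p := Ordinal (rkp (i, ord0)).
rewrite /nrows; have -> : [set t | Delta c t != None] = f @: 'I_n.
  apply/setP => t; rewrite inE; apply/idP/imsetP.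
    case E: (Delta c t) => [[cc P]|] // _.
    by have [i [e1 _ _]] := Delta_inv E; exists i => //; apply: val_inj.
  by case=> i _ ->; rewrite (@Delta_some c i).
rewrite card_imset ?card_ord // => i i' /(congr1 val) /=.
exact: cr1_inj.
Qed.

End Delta.

Lemma inc_unique_ord n (f g : 'I_n -> nat) :
  (forall i j : 'I_n, i < j -> f i < f j) -> (forall i j : 'I_n, i < j -> g i < g j) ->
  (forall i, exists j, f i = g j) -> (forall i, exists j, g i = f j) -> f =1 g.
Proof.
move=> fi gi fg gf.
pose F m := if @insub _ (fun m => m < n) 'I_n m is Some i then f i else 0.
pose G m := if @insub _ (fun m => m < n) 'I_n m is Some i then g i else 0.
have FE i : F (val i) = f i by rewrite /F valK.
have GE i : G (val i) = g i by rewrite /G valK.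
move=> i; rewrite -FE -GE; apply: (@inc_unique n) => //.
- move=> a b /andP[ab bn]; have an := ltn_trans ab bn.
  by rewrite -[a]/(val (Ordinal an)) -[b]/(val (Ordinal bn)) !FE; apply: fi.
- move=> a b /andP[ab bn]; have an := ltn_trans ab bn.
  by rewrite -[a]/(val (Ordinal an)) -[b]/(val (Ordinal bn)) !GE; apply: gi.
- move=> a an; have [j e] := fg (Ordinal an); exists (val j); first exact: ltn_ord.
  by rewrite -[a]/(val (Ordinal an)) FE GE.
- move=> a an; have [j e] := gf (Ordinal an); exists (val j); first exact: ltn_ord.
  by rewrite -[a]/(val (Ordinal an)) FE GE.
- exact: ltn_ord.
Qed.

Section Delta2.
Variables n D k p : nat.
Local Notation d := D.+1.
Implicit Types c : CRcand n d k.

Lemma Delta_inj c c' : is_CR c -> cr_size c = p -> is_CR c' -> cr_size c' = p ->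
  Delta p c = Delta p c' -> c = c'.
Proof.
move=> H hp H' hp' E.
have rkp x : rk c x < p by rewrite -hp rk_ltp.
have rkp' x : rk c' x < p by rewrite -hp' rk_ltp.
have same0 : forall i, rk c (i, ord0) = rk c' (i, ord0).
  apply: inc_unique_ord; try by move=> i j; apply: cr1.
  - move=> i; pose t : 'I_p := Ordinal (rkp (i, ord0)).
    have := @Delta_some n D k p c i t H erefl; rewrite E.
    case E2: (Delta p c' t) => [[cc P]|] // _.
    by have [j [e1 _ _]] := Delta_inv E2; exists j; rewrite e1.
  - move=> i; pose t : 'I_p := Ordinal (rkp' (i, ord0)).
    have := @Delta_some n D k p c' i t H' erefl; rewrite -E.
    case E2: (Delta p c t) => [[cc P]|] // _.
    by have [j [e1 _ _]] := Delta_inv E2; exists j; rewrite e1.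
have same : forall i, c.1 i = c'.1 i /\ forall l, rk c (i, l) = rk c' (i, l).
  move=> i; pose t : 'I_p := Ordinal (rkp (i, ord0)).
  have := @Delta_some n D k p c i t H erefl; rewrite E.
  rewrite (@Delta_some n D k p c' i t H') /=; last by rewrite -same0.
  case=> -> /ffunP e; split => // l.
  have := e l; rewrite !ffunE => /(congr1 val).
  by rewrite !val_insubd rkp rkp'.
case: c c' H hp H' hp' E rkp rkp' same0 same => [Y R] [Y' R'] H hp H' hp' E rkp rkp' same0 same.
have -> : Y = Y' by apply/ffunP => i; have [] := same i.
have -> : R = R'; last by [].
apply/ffunP => [[[i l] [i' l']]].
have e1 : R ((i, l), (i', l')) = cr_le (Y, R) (i, l) (i', l') by [].
have e2 : R' ((i, l), (i', l')) = cr_le (Y', R') (i, l) (i', l') by [].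
rewrite e1 e2 !rk_le //.
by rewrite !(proj2 (same _)).
Qed.

Lemma isCR_rank (c : CRcand n d k) (F : CRidx n d -> nat) :
   (forall x y, cr_le c x y = (F x <= F y)) ->
   (forall i i' : 'I_n, i < i' -> F (i, ord0) < F (i', ord0)) ->
   (forall i i' j, F (i, j) = F (i', j) -> c.1 i = c.1 i') ->
   (forall i (j j' : 'I_d), j' < j -> F (i, j) < F (i, j')) ->
   (forall i i' j j', F (i, j) = F (i', j') -> j = j') ->
   (forall i i' (j j' : 'I_d), val j = (val j').+1 -> F (i, j') = F (i', j') -> F (i, j) = F (i', j)) ->
   is_CR c.
Proof.
move=> HF H1 H2 H3 H4 H5.
have Hlt x y : cr_lt c x y = (F x < F y).
  by rewrite /cr_lt !HF -ltnNge andb_idl // => /ltnW.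
have Heq x y : cr_eqv c x y = (F x == F y).
  by rewrite /cr_eqv !HF eqn_leq.
apply/and5P; split.
- apply/andP; split.
    by apply/forallP => x; apply/forallP => y; rewrite !HF leq_total.
  apply/forallP => x; apply/forallP => y; apply/forallP => z; rewrite !HF.
  by apply/implyP => a; apply/implyP; apply: leq_trans.
- rewrite /cr_cond1 /=.
  apply/forallP => i; apply/forallP => i'; apply/forallP => j.
  apply/implyP => /eqP j0; apply/implyP => ii.
  have -> : j = ord0 by apply: val_inj.
  by rewrite Hlt; apply: H1.
- apply/forallP => i; apply/forallP => i'; apply/forallP => j.
  by apply/implyP; rewrite Heq => /eqP /H2 ->.
- apply/forallP => i; apply/forallP => j; apply/forallP => j'.
  by apply/implyP => jj; rewrite Hlt; apply: H3.
- apply/andP; split.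
    apply/forallP => i; apply/forallP => i'; apply/forallP => j; apply/forallP => j'.
    by apply/implyP; rewrite Heq => /eqP /H4 ->.
  apply/forallP => i; apply/forallP => i'; apply/forallP => j; apply/forallP => j'.
  apply/implyP => /eqP e; apply/implyP; rewrite !Heq; apply: contra => /eqP e2.
  by rewrite (H5 i i' j j' e e2).
Qed.

End Delta2.

Section Delta3.
Variables n D k p : nat.
Local Notation d := D.+1.

Lemma Delta_onto (h : Hs d k p) : good h -> nrows h = n ->
  exists2 c : CRcand n d k, is_CR c && (cr_size c == p) & Delta p c = h.
Proof.
move=> g hn; rewrite /nrows in hn.
set Rw := [set t | h t != None] in hn.
pose rowi (i : 'I_n) : 'I_p := enum_val (cast_ord (esym hn) i).
have rowi_in i : h (rowi i) != None.
  by have := enum_valP (cast_ord (esym hn) i); rewrite inE.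
have rowi_lt i i' : (rowi i < rowi i') = (i < i').
  by rewrite /rowi enum_val_ltn.
have rowi_inj : injective rowi.
  move=> i i' e; case: (ltngtP i i') => [ii|ii|/val_inj //].
    by move: ii; rewrite -rowi_lt e ltnn.
  by move: ii; rewrite -rowi_lt e ltnn.
have rowi_onto t : h t != None -> exists i, rowi i = t.
  move=> ht; have tin : t \in Rw by rewrite inE.
  exists (cast_ord hn (enum_rank_in tin t)).
  by rewrite /rowi cast_ordK enum_rankK_in.
have rowd i : exists cc P, h (rowi i) = Some (cc, P).
  by move: (rowi_in i); case: (h (rowi i)) => [[cc P]|] //; exists cc, P.
have c0 : 'I_n -> 'I_k.
  move=> i; case: (posnP k) => [k0|kp]; last exact: (Ordinal kp).
  exfalso; have [cc [P _]] := rowd i; have := ltn_ord cc; move: (nat_of_ord cc) => m; by rewrite k0.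
pose Pv (x : 'I_n * 'I_d) : nat := if h (rowi x.1) is Some (_, P) then P x.2 else 0.
pose Y : {ffun 'I_n -> 'I_k} := [ffun i => if h (rowi i) is Some (cc, _) then cc else c0 i].
pose R : {ffun CRidx n d * CRidx n d -> bool} := [ffun xy => Pv xy.1 <= Pv xy.2].
pose c : CRcand n d k := (Y, R).
have HF x y : cr_le c x y = (Pv x <= Pv y) by rewrite /cr_le /= ffunE.
have PvE i cc P l : h (rowi i) = Some (cc, P) -> Pv (i, l) = P l.
  by rewrite /Pv /= => ->.
have Pvp x : Pv x < p.
  case: x => i l; have [cc [P E]] := rowd i; by rewrite (PvE _ _ _ _ E).
have Pvs v : v < p -> exists x, Pv x = v.
  move=> vp; have [t [cc [P [l [E e]]]]] := goodS (Ordinal vp) g.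
  have [i ei] : exists i, rowi i = t by apply: rowi_onto; rewrite E.
  by exists (i, l); rewrite (PvE i cc P) ?e // ei.
have Pv0 i : Pv (i, ord0) = rowi i.
  have [cc [P E]] := rowd i; rewrite (PvE _ _ _ _ E).
  by rewrite (good0 g E (l := ord0)).
have HCR : is_CR c.
  apply: (@isCR_rank n D k c Pv HF).
  - by move=> i i' ii; rewrite !Pv0 rowi_lt.
  - move=> i i' j; have [cc [P E]] := rowd i; have [cc' [P' E']] := rowd i'.
    rewrite (PvE _ _ _ _ E) (PvE _ _ _ _ E') => /val_inj e.
    by rewrite /c /= !ffunE E E'; apply: (good2 g E E' e).
  - move=> i j j' jj; have [cc [P E]] := rowd i.
    by rewrite !(PvE _ _ _ _ E); apply: (good3 g E jj).
  - move=> i i' j j'; have [cc [P E]] := rowd i; have [cc' [P' E']] := rowd i'.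
    rewrite (PvE _ _ _ _ E) (PvE _ _ _ _ E') => /val_inj e.
    exact: (good4 g E E' e).
  - move=> i i' j j' e; have [cc [P E]] := rowd i; have [cc' [P' E']] := rowd i'.
    rewrite !(PvE _ _ _ _ E) !(PvE _ _ _ _ E') => /val_inj e2.
    by rewrite (good5 g E E' e e2).
have Hsz : cr_size c = p.
  have tot := CR_total HCR; have tr := CR_trans HCR.
  pose gg x : 'I_p := Ordinal (Pvp x).
  have -> : cr_size c = #|[set gg x | x : CRidx n d]|.
    rewrite /cr_size; apply: (card_imset_kernel (f := clsR (cr_le c))) => x y.
    rewrite (clsR_eq tot tr) /eqvR !HF -eqn_leq.
    by apply/eqP/eqP => [e|/(congr1 val) //]; apply: val_inj.
  have : [set gg x | x : CRidx n d] == setT.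
    rewrite eqEcard subsetT /=.
    apply: subset_leq_card; apply/subsetP => v _.
    by have [x e] := Pvs v (ltn_ord v); apply/imsetP; exists x => //; apply: val_inj.
  by move/eqP ->; rewrite cardsT card_ord.
have rkPv x : rk c x = Pv x.
  apply: (@surj_unique _ p) => //.
  - by move=> y; rewrite -Hsz rk_ltp.
  - by move=> v vp; apply: rk_surj => //; rewrite Hsz.
  - by move=> y z; rewrite -rk_le // HF.
exists c; first by rewrite HCR Hsz eqxx.
apply/ffunP => t.
case E: (h t) => [[cc P]|].
  have [i ei] : exists i, rowi i = t by apply: rowi_onto; rewrite E.
  rewrite -ei in E.
  rewrite (@Delta_some n D k p c i t HCR); last by rewrite rkPv Pv0 ei.
  rewrite /c /= ffunE E; congr (Some (_, _)).
  apply/ffunP => l; rewrite ffunE; apply: val_inj.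
  by rewrite val_insubd rkPv Pvp (PvE _ _ _ _ E).
apply: Delta_none => i; rewrite rkPv Pv0.
apply/negP => /eqP /val_inj e.
by move: (rowi_in i); rewrite e E.
Qed.

Lemma Pcount_NN : Pcount p n d k = NN n d k p.
Proof.
rewrite /Pcount /NN.
set PC := [set c : CRcand n d k | is_CR c && (cr_size c == p)].
have -> : [set h : Hs d k p | good h && (nrows h == n)] = Delta p @: PC.
  apply/setP => h; rewrite inE; apply/idP/imsetP.
    case/andP => g /eqP hn; have [c Hc E] := Delta_onto g hn.
    by exists c; rewrite ?inE.
  case=> c; rewrite inE => /andP[H /eqP hp] ->.
  exact: Delta_good.
rewrite card_in_imset // => c c'; rewrite !inE => /andP[H /eqP hp] /andP[H' /eqP hp'].
exact: Delta_inj.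
Qed.

End Delta3.

Lemma d1_all_rows k p (h : Hs 1 k p) : good h -> forall t, exists cc, h t = Some (cc, [ffun _ => t]).
Proof.
move=> g u; have [t [cc [P [l [E e]]]]] := goodS u g.
have l0 : l = ord0 by apply: val_inj; case: l {e} => [[]].
have Pt := good0 g E (l := ord0) erefl.
have -> : u = t by rewrite -e l0 Pt.
exists cc; rewrite E; congr (Some (_, _)); apply/ffunP => l'; rewrite ffunE.
by have -> : l' = ord0 by apply: val_inj; case: l' => [[]].
Qed.

Lemma NN_d1 n k p : NN n 1 k p = if n == p then k ^ n else 0.
Proof.
rewrite /NN.
have nr : forall h : Hs 1 k p, good h -> nrows h = p.
  move=> h g; rewrite /nrows; transitivity #|[set: 'I_p]|; last by rewrite cardsT card_ord.
  apply: eq_card => t; rewrite !inE.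
  by have [cc ->] := d1_all_rows g t.
case: eqP => [<-|np]; last first.
  apply/eqP; rewrite cards_eq0; apply/eqP/setP => h; rewrite !inE.
  by apply/negbTE/negP => /andP[g /eqP]; rewrite nr // => e; apply: np.
pose phi (Y : {ffun 'I_n -> 'I_k}) : Hs 1 k n := [ffun t => Some (Y t, [ffun _ => t])].
have -> : [set h : Hs 1 k n | good h && (nrows h == n)] = phi @: [set: {ffun 'I_n -> 'I_k}].
  apply/setP => h; rewrite inE; apply/idP/imsetP.
    case/andP => g _.
    have c0 : 'I_n -> 'I_k.
      move=> t; case: (posnP k) => [k0|kp]; last exact: (Ordinal kp).
      exfalso; have [cc _] := d1_all_rows g t; have := ltn_ord cc.
      by move: (nat_of_ord cc) => m; rewrite k0.
    exists [ffun t => if h t is Some (cc, _) then cc else c0 t] => //.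
    apply/ffunP => t; rewrite !ffunE; have [cc E] := d1_all_rows g t.
    by rewrite E.
  case=> Y _ ->; apply/andP; split; last first.
    apply/eqP; rewrite /nrows; transitivity #|[set: 'I_n]|; last by rewrite cardsT card_ord.
    by apply: eq_card => t; rewrite !inE ffunE.
  have o1 (l : 'I_1) : l = ord0 by apply: val_inj; case: l => [[]].
  apply: goodI.
  - by move=> t cc P l; rewrite ffunE => -[_ <-] _; rewrite ffunE.
  - by move=> t cc P l l'; rewrite (o1 l) (o1 l').
  - by move=> t cc P t' cc' P' l l' _ _ _; rewrite (o1 l) (o1 l').
  - by move=> t cc P t' cc' P' l; rewrite !ffunE => -[<- <-] [<- <-]; rewrite !ffunE => ->.
  - by move=> t cc P t' cc' P' l l'; rewrite (o1 l) (o1 l').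
  - by move=> u; exists u, (Y u), [ffun _ => u], ord0; rewrite ffunE ffunE.
rewrite card_imset; first by rewrite cardsT card_ffun !card_ord.
move=> Y Y' /ffunP e; apply/ffunP => t; have := e t; rewrite !ffunE.
by case.
Qed.

Lemma pick_uniq (T : finType) (P : pred T) x : P x -> (forall y, P y -> y = x) -> [pick y | P y] = Some x.
Proof. by move=> Px H; case: pickP => [y /H -> //|/(_ x)]; rewrite Px. Qed.

Lemma lift0_inj m : injective (@lift m.+1 ord0).
Proof. exact: lift_inj. Qed.

Lemma lift0_neq0 m (x : 'I_m) : lift ord0 x != ord0.
Proof. by apply/eqP => /(congr1 (@nat_of_ord _)); rewrite lift0. Qed.

Lemma ev_TC m (T : {set 'I_m}) (a : 'I_#|T|) (a' : 'I_#|~: T|) : enum_val a != enum_val a'.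
Proof.
apply/eqP => e; have := enum_valP a; have := enum_valP a'.
by rewrite !inE e => /negP.
Qed.

Section Psi.
Variables D k p' : nat.
Hypothesis Dpos : 0 < D.
Variable T : {set 'I_p'}.
Local Notation i := #|T|.
Local Notation q := #|~: T|.

Definition wid (l1 : 'I_D) : 'I_D.+1 := widen_ord (leqnSn D) l1.

Definition blkP (P1 : {ffun 'I_D -> 'I_i}) : {ffun 'I_D.+1 -> 'I_p'.+1} :=
  [ffun l : 'I_D.+1 => if (insub (val l) : option 'I_D) is Some l1
                       then lift ord0 (enum_val (P1 l1)) else ord0].
Definition rstP (P2 : {ffun 'I_D.+1 -> 'I_q}) : {ffun 'I_D.+1 -> 'I_p'.+1} :=
  [ffun l => lift ord0 (enum_val (P2 l))].

Definition Psi (b : 'I_k) (h1 : Hs D 1 i) (h2 : Hs D.+1 k q) : Hs D.+1 k p'.+1 :=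
  [ffun u => if unlift ord0 u is Some v then
       if [pick a : 'I_i | enum_val a == v] is Some a then
          omap (fun cP => (b, blkP cP.2)) (h1 a)
       else if [pick a : 'I_q | enum_val a == v] is Some a then
          omap (fun cP => (cP.1, rstP cP.2)) (h2 a)
       else None
     else None].

Lemma blkP_lt P1 (l1 : 'I_D) (l : 'I_D.+1) : val l = val l1 -> blkP P1 l = lift ord0 (enum_val (P1 l1)).
Proof.
move=> e; rewrite ffunE; have lD : val l < D by rewrite e ltn_ord.
rewrite insubT; have -> : (Sub (val l) lD : 'I_D) = l1 by apply: val_inj.
by [].
Qed.

Lemma blkP_D P1 (l : 'I_D.+1) : val l = D -> blkP P1 l = ord0.
Proof. by move=> e; rewrite ffunE insubF // e ltnn. Qed.

Lemma blkP_cases P1 (l : 'I_D.+1) :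
  (exists2 l1 : 'I_D, val l = val l1 & blkP P1 l = lift ord0 (enum_val (P1 l1))) \/
  (val l = D /\ blkP P1 l = ord0).
Proof.
case: (ltngtP (val l) D) => [lD|/[dup] + |lD].
- by left; exists (Ordinal lD) => //; apply: blkP_lt.
- by have := ltn_ord l; rewrite ltnS leqNgt => /negP.
- by right; split => //; apply: blkP_D.
Qed.

Lemma u_cases (u : 'I_p'.+1) : u = ord0 \/ (exists a : 'I_i, u = lift ord0 (enum_val a)) \/
  (exists a : 'I_q, u = lift ord0 (enum_val a)).
Proof.
case: (unliftP ord0 u) => [v ->|->]; last by left.
right; case: (boolP (v \in T)) => vT.
  by left; exists (enum_rank_in vT v); rewrite enum_rankK_in.
have vC : v \in ~: T by rewrite inE.
by right; exists (enum_rank_in vC v); rewrite enum_rankK_in.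
Qed.

Variables (b : 'I_k) (h1 : Hs D 1 i) (h2 : Hs D.+1 k q).

Lemma Psi0 : Psi b h1 h2 ord0 = None.
Proof. by rewrite ffunE unlift_none. Qed.

Lemma PsiT (a : 'I_i) : Psi b h1 h2 (lift ord0 (enum_val a)) = omap (fun cP => (b, blkP cP.2)) (h1 a).
Proof.
rewrite ffunE liftK (@pick_uniq _ _ a) //; last by move=> y /eqP /enum_val_inj.
Qed.

Lemma PsiC (a : 'I_q) : Psi b h1 h2 (lift ord0 (enum_val a)) = omap (fun cP => (cP.1, rstP cP.2)) (h2 a).
Proof.
rewrite ffunE liftK.
case: pickP => [a' /eqP e|_]; first by have := ev_TC a' a; rewrite e eqxx.
rewrite (@pick_uniq _ _ a) //; last by move=> y /eqP /enum_val_inj.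
Qed.

End Psi.

Definition Tset D k p' (h : Hs D.+1 k p'.+1) : {set 'I_p'} :=
  [set v | [exists t, exists l : 'I_D.+1,
     if h t is Some (c, P) then (P ord_max == ord0) && (P l == lift ord0 v) else false]].

Section Psi2.
Variables D k p' : nat.
Hypothesis Dpos : 0 < D.
Variable T : {set 'I_p'}.
Local Notation i := #|T|.
Local Notation q := #|~: T|.
Variables (b : 'I_k) (h1 : Hs D 1 i) (h2 : Hs D.+1 k q).
Local Notation Ps := (Psi b h1 h2).

Lemma Psi_row u c P : Ps u = Some (c, P) ->
  (exists a c1 P1, [/\ u = lift ord0 (enum_val a), h1 a = Some (c1, P1), c = b & P = blkP P1]) \/
  (exists a P2, [/\ u = lift ord0 (enum_val a), h2 a = Some (c, P2) & P = rstP P2]).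
Proof.
case: (u_cases T u) => [->|[[a ->]|[a ->]]]; first by rewrite Psi0.
  rewrite PsiT; case E: (h1 a) => [[c1 P1]|] //= [<- <-].
  by left; exists a, c1, P1.
rewrite PsiC; case E: (h2 a) => [[c2 P2]|] //= [<- <-].
by right; exists a, P2.
Qed.

Lemma blk_ne_rst (P1 : {ffun 'I_D -> 'I_i}) (P2 : {ffun 'I_D.+1 -> 'I_q}) l l' :
  blkP P1 l != rstP P2 l'.
Proof.
rewrite [rstP P2 l']ffunE; case: (blkP_cases P1 l) => [[l1 _ ->]|[_ ->]].
  by rewrite (inj_eq (@lift0_inj _)) ev_TC.
by rewrite eq_sym lift0_neq0.
Qed.

Lemma lift0_lt m (x y : 'I_m) : (lift ord0 x < lift ord0 y) = (x < y).
Proof. by rewrite !lift0. Qed.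

Lemma Psi_good : good h1 -> good h2 -> 0 < nrows h1 -> good Ps.
Proof.
move=> g1 g2 n1.
have D0 : 0 < D := Dpos.
apply: goodI.
- move=> u c P l /Psi_row [[a [c1 [P1 [-> E _ ->]]]]|[a [P2 [-> E ->]]]] l0.
    rewrite (@blkP_lt D p' T P1 (Ordinal D0) l) //.
    by rewrite (good0 g1 E (l := Ordinal D0)).
  by rewrite /rstP ffunE (good0 g2 E l0).
- move=> u c P l l' /Psi_row [[a [c1 [P1 [_ E _ ->]]]]|[a [P2 [_ E ->]]]] ll.
    have l'D : val l' < D by apply: leq_trans ll _; rewrite -ltnS.
    rewrite (@blkP_lt D p' T P1 (Ordinal l'D) l') //.
    case: (blkP_cases P1 l) => [[l1 e ->]|[_ ->]]; last by rewrite lift0.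
    rewrite lift0_lt enum_val_ltn; apply: (good3 g1 E).
    by rewrite /= -e.
  by rewrite /rstP !ffunE lift0_lt enum_val_ltn; apply: (good3 g2 E).
- move=> u c P u' c' P' l l'.
  move=> /Psi_row [[a [c1 [P1 [_ E _ ->]]]]|[a [P2 [_ E ->]]]];
  move=> /Psi_row [[a' [c1' [P1' [_ E' _ ->]]]]|[a' [P2' [_ E' ->]]]].
  + case: (blkP_cases P1 l) => [[l1 e ->]|[e ->]];
    case: (blkP_cases P1' l') => [[l1' e' ->]|[e' ->]].
    * move/lift0_inj/enum_val_inj => e2; have := good4 g1 E E' e2.
      by move=> ee; apply: val_inj; rewrite e e' ee.
    * by move/eqP; rewrite (negbTE (lift0_neq0 _)).
    * by move/eqP; rewrite eq_sym (negbTE (lift0_neq0 _)).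
    * by move=> _; apply: val_inj; rewrite e e'.
  + by move/eqP; rewrite (negbTE (blk_ne_rst _ _ _ _)).
  + by move/eqP; rewrite eq_sym (negbTE (blk_ne_rst _ _ _ _)).
  + rewrite /rstP !ffunE => /lift0_inj/enum_val_inj e2.
    exact: good4 g2 E E' e2.
- move=> u c P u' c' P' l.
  move=> /Psi_row [[a [c1 [P1 [_ E -> ->]]]]|[a [P2 [_ E ->]]]];
  move=> /Psi_row [[a' [c1' [P1' [_ E' -> ->]]]]|[a' [P2' [_ E' ->]]]] //.
  + by move/eqP; rewrite (negbTE (blk_ne_rst _ _ _ _)).
  + by move/eqP; rewrite eq_sym (negbTE (blk_ne_rst _ _ _ _)).
  + rewrite /rstP !ffunE => /lift0_inj/enum_val_inj e2.
    exact: good2 g2 E E' e2.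
- move=> u c P u' c' P' l l'.
  move=> /Psi_row [[a [c1 [P1 [_ E _ ->]]]]|[a [P2 [_ E ->]]]];
  move=> /Psi_row [[a' [c1' [P1' [_ E' _ ->]]]]|[a' [P2' [_ E' ->]]]]; move=> e.
  + have l'D : val l' < D by have := ltn_ord l; rewrite e ltnS.
    rewrite (@blkP_lt D p' T P1 (Ordinal l'D) l') // (@blkP_lt D p' T P1' (Ordinal l'D) l') // => /lift0_inj/enum_val_inj e2.
    case: (blkP_cases P1 l) => [[l1 el ->]|[el ->]].
      rewrite (@blkP_lt D p' T P1' l1 l) //.
      by rewrite (good5 (l' := Ordinal l'D) g1 E E') //= -el.
    by rewrite blkP_D.
  + by move/eqP; rewrite (negbTE (blk_ne_rst _ _ _ _)).
  + by move/eqP; rewrite eq_sym (negbTE (blk_ne_rst _ _ _ _)).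
  + rewrite /rstP !ffunE => /lift0_inj/enum_val_inj e2.
    by rewrite (good5 g2 E E' e e2).
- move=> u; case: (u_cases T u) => [->|[[a0 ->]|[a0 ->]]].
  + move: n1; rewrite /nrows card_gt0 => /set0Pn [a]; rewrite inE.
    case E: (h1 a) => [[c1 P1]|] // _.
    exists (lift ord0 (enum_val a)), b, (blkP P1), ord_max; split.
      by rewrite PsiT E.
    exact: blkP_D.
  + have [t1 [c1 [P1 [l1 [E e]]]]] := goodS a0 g1.
    exists (lift ord0 (enum_val t1)), b, (blkP P1), (wid l1); split.
      by rewrite PsiT E.
    by rewrite (@blkP_lt D p' T P1 l1 (wid l1)) // e.
  + have [t2 [c2 [P2 [l2 [E e]]]]] := goodS a0 g2.
    exists (lift ord0 (enum_val t2)), c2, (rstP P2), l2; split.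
      by rewrite PsiC E.
    by rewrite /rstP ffunE e.
Qed.

End Psi2.

Lemma ord1_eq (x y : 'I_1) : x = y.
Proof. apply: val_inj; case: x => [[|m] hx]; case: y => [[|m'] hy] //. Qed.

Section Psi3.
Variables D k p' : nat.
Hypothesis Dpos : 0 < D.
Variable T : {set 'I_p'}.
Local Notation i := #|T|.
Local Notation q := #|~: T|.

Lemma blkP_inj : injective (@blkP D p' T).
Proof.
move=> P1 P1' /ffunP e; apply/ffunP => l1; have := e (wid l1).
rewrite (@blkP_lt D p' T P1 l1 (wid l1)) // (@blkP_lt D p' T P1' l1 (wid l1)) //.
by move/lift0_inj/enum_val_inj.
Qed.

Lemma rstP_inj : injective (@rstP D p' T).
Proof.
move=> P2 P2' /ffunP e; apply/ffunP => l; have := e l.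
by rewrite !ffunE => /lift0_inj/enum_val_inj.
Qed.

Variables (b : 'I_k) (h1 : Hs D 1 i) (h2 : Hs D.+1 k q).
Local Notation Ps := (Psi b h1 h2).

Lemma Psi_Tset : good h1 -> Tset Ps = T.
Proof.
move=> g1; apply/setP => v; rewrite inE; apply/existsP/idP.
  case=> t /existsP [l]; case E: (Ps t) => [[c P]|] //.
  case/Psi_row: E => [[a [c1 [P1 [_ _ _ ->]]]]|[a [P2 [_ _ ->]]]].
    case: (blkP_cases P1 l) => [[l1 _ ->]|[_ ->]] /andP [_ /eqP].
      by move/lift0_inj => <-; apply: enum_valP.
    by move/eqP; rewrite eq_sym (negbTE (lift0_neq0 _)).
  by rewrite /rstP ffunE (negbTE (lift0_neq0 _)).
move=> vT; pose a0 := enum_rank_in vT v.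
have [t1 [c1 [P1 [l1 [E e]]]]] := goodS a0 g1.
exists (lift ord0 (enum_val t1)); apply/existsP; exists (wid l1).
rewrite PsiT E /= blkP_D // eqxx /=.
by rewrite (@blkP_lt D p' T P1 l1 (wid l1)) // e /a0 enum_rankK_in.
Qed.

Lemma Psi_nrows : nrows Ps = nrows h1 + nrows h2.
Proof.
pose f1 (a : 'I_i) : 'I_p'.+1 := lift ord0 (enum_val a).
pose f2 (a : 'I_q) : 'I_p'.+1 := lift ord0 (enum_val a).
have f1i : injective f1 by move=> x y /lift0_inj/enum_val_inj.
have f2i : injective f2 by move=> x y /lift0_inj/enum_val_inj.
have f12 x y : f1 x != f2 y by rewrite (inj_eq (@lift0_inj _)) ev_TC.
rewrite /nrows.
have -> : [set u | Ps u != None] =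
   f1 @: [set a | h1 a != None] :|: f2 @: [set a | h2 a != None].
  apply/setP => u; rewrite !inE.
  case: (u_cases T u) => [->|[[a ->]|[a ->]]].
  - rewrite Psi0 /=; symmetry; apply/negbTE; rewrite negb_or.
    apply/andP; split; apply/negP => /imsetP [x _] /eqP; rewrite eq_sym.
      by rewrite (negbTE (lift0_neq0 _)).
    by rewrite (negbTE (lift0_neq0 _)).
  - rewrite PsiT -[lift ord0 _]/(f1 a) mem_imset // inE.
    have -> : (f1 a \in f2 @: [set a0 | h2 a0 != None]) = false.
      by apply/negbTE/negP => /imsetP [x _] /eqP; rewrite (negbTE (f12 _ _)).
    by rewrite orbF; case: (h1 a).
  - rewrite PsiC -[lift ord0 _]/(f2 a) mem_imset // inE.
    have -> : (f2 a \in f1 @: [set a0 | h1 a0 != None]) = false.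
      by apply/negbTE/negP => /imsetP [x _] /eqP; rewrite eq_sym (negbTE (f12 _ _)).
    by case: (h2 a).
rewrite -(card_imset [set a | h1 a != None] f1i) -(card_imset [set a | h2 a != None] f2i) -cardsUI.
have -> : f1 @: [set a | h1 a != None] :&: f2 @: [set a | h2 a != None] = set0.
  apply/setP => u; rewrite !inE; apply/negbTE/negP => /andP [/imsetP [x _ ->] /imsetP [y _ /eqP]].
  by rewrite (negbTE (f12 _ _)).
by rewrite cards0 addn0.
Qed.

End Psi3.

Lemma Psi_inj D k p' (Dpos : 0 < D) (T : {set 'I_p'}) b b' h1 h1' h2 h2' :
  0 < nrows h1 -> Psi b h1 h2 = Psi b' h1' h2' -> (b, (h1, h2)) = (b', (h1', h2')) :> ('I_k * (Hs D 1 #|T| * Hs D.+1 k #|~: T|)).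
Proof.
move=> n1 /ffunP E.
have e1 : h1 = h1'.
  apply/ffunP => a; have := E (lift ord0 (enum_val a)); rewrite !PsiT //.
  case: (h1 a) => [[c1 P1]|]; case: (h1' a) => [[c1' P1']|] //= [_ /(@blkP_inj D p' T) ->].
  by rewrite (ord1_eq c1 c1').
have e2 : h2 = h2'.
  apply/ffunP => a; have := E (lift ord0 (enum_val a)); rewrite !PsiC //.
  by case: (h2 a) => [[c2 P2]|]; case: (h2' a) => [[c2' P2']|] //= [-> /(@rstP_inj D p' T) ->].
have eb : b = b'.
  move: n1; rewrite /nrows card_gt0 => /set0Pn [a]; rewrite inE.
  have := E (lift ord0 (enum_val a)); rewrite !PsiT // -e1.
  by case: (h1 a) => [[c1 P1]|] //= [].
by rewrite e1 e2 eb.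
Qed.

Definition ridx m (A : {set 'I_m}) (a : 'I_#|A|) (w : 'I_m.+1) : 'I_#|A| :=
  odflt a [pick a' : 'I_#|A| | lift ord0 (enum_val a') == w].

Lemma ridx_spec m (A : {set 'I_m}) (a : 'I_#|A|) (v : 'I_m) w :
  v \in A -> w = lift ord0 v -> lift ord0 (enum_val (ridx a w)) = w.
Proof.
move=> vA ->; rewrite /ridx (@pick_uniq _ _ (enum_rank_in vA v)) /=.
- by rewrite enum_rankK_in.
- by rewrite enum_rankK_in.
- by move=> y /eqP /lift0_inj e; apply: enum_val_inj; rewrite enum_rankK_in.
Qed.

Lemma evl_inj m (A : {set 'I_m}) (x y : 'I_#|A|) :
  lift ord0 (enum_val x) = lift ord0 (enum_val y) -> x = y.
Proof. by move/lift0_inj/enum_val_inj. Qed.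

Lemma evl_lt m (A : {set 'I_m}) (x y : 'I_#|A|) :
  (lift ord0 (enum_val x) < lift ord0 (enum_val y)) = (x < y).
Proof. by rewrite lift0_lt enum_val_ltn. Qed.

Section Decomp.
Variables D k p' : nat.
Hypothesis Dpos : 0 < D.
Variable h : Hs D.+1 k p'.+1.
Hypothesis g : good h.
Local Notation T := (Tset h).
Local Notation mx := (@ord_max D).

Lemma Fa : h ord0 = None.
Proof.
case E: (h ord0) => [[c P]|] //.
have := good3 g E (l := mx) (l' := ord0) Dpos.
by rewrite (good0 g E (l := ord0)).
Qed.

Lemma lt_mx (l : 'I_D.+1) : val l < D -> mx < l -> False.
Proof. by move=> lD; rewrite ltnNge => /negP; apply; apply: ltnW. Qed.

Lemma Fb t c P (l : 'I_D.+1) : h t = Some (c, P) -> P mx = ord0 -> val l < D ->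
  exists2 v, v \in T & P l = lift ord0 v.
Proof.
move=> E Pm lD.
have : P mx < P l by apply: (good3 g E).
rewrite Pm; case: (unliftP ord0 (P l)) => [v e|->] //.
exists v => //; rewrite inE; apply/existsP; exists t; apply/existsP; exists l.
by rewrite E Pm e !eqxx.
Qed.

Lemma Fc t c P (l : 'I_D.+1) : h t = Some (c, P) -> P mx != ord0 ->
  exists2 v, v \notin T & P l = lift ord0 v.
Proof.
move=> E Pm.
have Pl0 : P l != ord0.
  case: (ltngtP (val l) D) => [lD|lD|lD].
  - have := good3 g E (l := mx) (l' := l) lD.
    by apply: contraL => /eqP ->.
  - by have := ltn_ord l; rewrite ltnS leqNgt lD.
  - by have -> : l = mx by apply: val_inj.
case: (unliftP ord0 (P l)) => [v e|e]; last by rewrite e eqxx in Pl0.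
exists v => //; apply/negP; rewrite inE => /existsP [t' /existsP [l']].
case E': (h t') => [[c' P']|] // /andP [/eqP P'm /eqP e'].
have ll : l' = l by apply: (good4 g E' E); rewrite e' e.
rewrite ll in e'.
have := goodUp (l := mx) (l' := l) g E E' (leq_ord l) (etrans e (esym e')).
by move=> H; move: Pm; rewrite H P'm eqxx.
Qed.

Lemma Fd (a : 'I_#|T|) c P : h (lift ord0 (enum_val a)) = Some (c, P) -> P mx = ord0.
Proof.
move=> E; apply/eqP; apply/negPn/negP => Pm.
have [v vT e] := Fc ord0 E Pm.
rewrite (good0 g E (l := ord0)) // in e.
by move/lift0_inj: e => e; move: vT; rewrite -e enum_valP.
Qed.

Lemma Fe (a : 'I_#|~: T|) c P : h (lift ord0 (enum_val a)) = Some (c, P) -> P mx != ord0.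
Proof.
move=> E; apply/negP => /eqP Pm.
have [v vT e] := Fb (l := ord0) E Pm Dpos.
rewrite (good0 g E (l := ord0)) // in e.
move/lift0_inj: e => e; have := enum_valP a; rewrite e inE.
by rewrite vT.
Qed.

Definition h1d : Hs D 1 #|T| :=
  [ffun a : 'I_#|T| => omap (fun cP : 'I_k * {ffun 'I_D.+1 -> 'I_p'.+1} => (ord0 : 'I_1, [ffun l1 : 'I_D => ridx a (cP.2 (wid l1))]))
                            (h (lift ord0 (enum_val a)))].
Definition h2d : Hs D.+1 k #|~: T| :=
  [ffun a : 'I_#|~: T| => omap (fun cP : 'I_k * {ffun 'I_D.+1 -> 'I_p'.+1} => (cP.1, [ffun l => ridx a (cP.2 l)]))
                            (h (lift ord0 (enum_val a)))].

Lemma h1_row a c1 Q : h1d a = Some (c1, Q) -> exists c P,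
  h (lift ord0 (enum_val a)) = Some (c, P) /\ forall l1, lift ord0 (enum_val (Q l1)) = P (wid l1).
Proof.
rewrite ffunE; case E: (h _) => [[c P]|] //= [_ <-].
exists c, P; split => // l1; rewrite ffunE.
have [v vT e] := Fb (l := wid l1) E (Fd E) (ltn_ord l1).
exact: ridx_spec vT e.
Qed.

Lemma h2_row a c Q : h2d a = Some (c, Q) -> exists P,
  h (lift ord0 (enum_val a)) = Some (c, P) /\ forall l, lift ord0 (enum_val (Q l)) = P l.
Proof.
rewrite ffunE; case E: (h _) => [[c' P]|] //= [<- <-].
exists P; split => // l; rewrite ffunE.
have [v vT e] := Fc l E (Fe E).
have vC : v \in ~: T by rewrite inE.
exact: ridx_spec vC e.
Qed.

Lemma h1_some a c P : h (lift ord0 (enum_val a)) = Some (c, P) -> exists Q, h1d a = Some (ord0, Q).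
Proof. by rewrite ffunE => ->; eexists. Qed.

Lemma h2_some a c P : h (lift ord0 (enum_val a)) = Some (c, P) -> exists Q, h2d a = Some (c, Q).
Proof. by rewrite ffunE => ->; eexists. Qed.

Lemma good_h1 : good h1d.
Proof.
apply: goodI.
- move=> a c1 Q l1 /h1_row [c [P [E HQ]]] l0.
  apply: evl_inj; rewrite HQ (good0 g E) //.
- move=> a c1 Q l1 l1' /h1_row [c [P [E HQ]]] ll.
  by rewrite -evl_lt !HQ; apply: (good3 g E).
- move=> a c1 Q a' c1' Q' l1 l1' /h1_row [c [P [E HQ]]] /h1_row [c' [P' [E' HQ']]] e.
  have : wid l1 = wid l1'.
    by apply: (good4 g E E'); rewrite -HQ -HQ' e.
  by move/(congr1 val) => /= /val_inj.
- by move=> *; apply: ord1_eq.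
- move=> a c1 Q a' c1' Q' l1 l1' /h1_row [c [P [E HQ]]] /h1_row [c' [P' [E' HQ']]] e1 e2.
  apply: evl_inj; rewrite HQ HQ'; apply: (good5 (l' := wid l1') g E E') => //.
  by rewrite -HQ -HQ' e2.
- move=> a0; have := enum_valP a0; rewrite inE => /existsP [t /existsP [l]].
  case E: (h t) => [[c P]|] // /andP [/eqP Pm /eqP e].
  case: (u_cases T t) => [et|[[a et]|[a et]]].
  + by move: E; rewrite et Fa.
  + rewrite et in E; have [Q E1] := h1_some E.
    have [c' [P' [E' HQ]]] := h1_row E1.
    rewrite E in E'; case: E' => _ ?; subst P'.
    have lD : val l < D.
      case: (ltngtP (val l) D) => // [|lD]; first by rewrite ltnNge -ltnS ltn_ord.
      have : l = mx by apply: val_inj.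
      by move=> el; move: e; rewrite el Pm => /eqP; rewrite eq_sym (negbTE (lift0_neq0 _)).
    exists a, ord0, Q, (Ordinal lD); split => //.
    apply: evl_inj; rewrite HQ -e; congr (P _); exact: val_inj.
  + by rewrite et in E; move: (Fe E); rewrite Pm eqxx.
Qed.

Lemma good_h2 : good h2d.
Proof.
apply: goodI.
- move=> a c Q l /h2_row [P [E HQ]] l0.
  apply: evl_inj; rewrite HQ (good0 g E) //.
- move=> a c Q l l' /h2_row [P [E HQ]] ll.
  by rewrite -evl_lt !HQ; apply: (good3 g E).
- move=> a c Q a' c' Q' l l' /h2_row [P [E HQ]] /h2_row [P' [E' HQ']] e.
  by apply: (good4 g E E'); rewrite -HQ -HQ' e.
- move=> a c Q a' c' Q' l /h2_row [P [E HQ]] /h2_row [P' [E' HQ']] e.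
  by apply: (good2 (l := l) g E E'); rewrite -HQ -HQ' e.
- move=> a c Q a' c' Q' l l' /h2_row [P [E HQ]] /h2_row [P' [E' HQ']] e1 e2.
  apply: evl_inj; rewrite HQ HQ'; apply: (good5 g E E' e1).
  by rewrite -HQ -HQ' e2.
- move=> a0; have [t [c [P [l [E e]]]]] := goodS (lift ord0 (enum_val a0)) g.
  case: (u_cases T t) => [et|[[a et]|[a et]]].
  + by move: E; rewrite et Fa.
  + rewrite et in E; have Pm := Fd E.
    case: (ltngtP (val l) D) => [lD|lD|lD].
    * have [v vT ev] := Fb E Pm lD.
      rewrite e in ev; move/lift0_inj: ev => ev.
      by have := enum_valP a0; rewrite ev inE vT.
    * by have := ltn_ord l; rewrite ltnS leqNgt lD.
    * have el : l = mx by apply: val_inj.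
      by move: e; rewrite el Pm => /eqP; rewrite eq_sym (negbTE (lift0_neq0 _)).
  + rewrite et in E; have [Q E2] := h2_some E.
    have [P' [E' HQ]] := h2_row E2.
    rewrite E in E'; case: E' => ?; subst P'.
    exists a, c, Q, l; split => //.
    by apply: evl_inj; rewrite HQ e.
Qed.

Lemma blockrow : exists t c P, h t = Some (c, P) /\ P mx = ord0.
Proof.
have [t [c [P [l [E e]]]]] := goodS ord0 g.
exists t, c, P; split => //.
case: (ltngtP (val l) D) => [lD|lD|lD].
- by have := good3 g E (l := mx) (l' := l) lD; rewrite e.
- by have := ltn_ord l; rewrite ltnS leqNgt lD.
- by have -> : mx = l by apply: val_inj.
Qed.

Lemma h1_pos : 0 < nrows h1d.
Proof.
have [t [c [P [E Pm]]]] := blockrow.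
case: (u_cases T t) => [et|[[a et]|[a et]]].
- by move: E; rewrite et Fa.
- rewrite et in E; have [Q E1] := h1_some E.
  rewrite /nrows card_gt0; apply/set0Pn; exists a; by rewrite inE E1.
- by rewrite et in E; move: (Fe E); rewrite Pm eqxx.
Qed.

Lemma Psi_decomp : exists b, Psi b h1d h2d = h.
Proof.
have [t0 [b [P0 [E0 P0m]]]] := blockrow.
exists b; apply/ffunP => u.
case: (u_cases T u) => [->|[[a ->]|[a ->]]].
- by rewrite Psi0 Fa.
- rewrite PsiT; case E: (h _) => [[c P]|]; last by rewrite ffunE E.
  have [Q E1] := h1_some E; rewrite E1 /=.
  have [c' [P' [E' HQ]]] := h1_row E1.
  rewrite E in E'; case: E' => ? ?; subst c' P'.
  have Pm := Fd E.
  have -> : c = b by apply: (good2 (l := mx) g E E0); rewrite Pm P0m.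
  congr (Some (_, _)); apply/ffunP => l.
  case: (blkP_cases Q l) => [[l1 el ->]|[el ->]].
    by rewrite HQ; congr (P _); apply: val_inj.
  by rewrite -Pm; congr (P _); apply: val_inj.
- rewrite PsiC; case E: (h _) => [[c P]|]; last by rewrite ffunE E.
  have [Q E2] := h2_some E; rewrite E2 /=.
  have [P' [E' HQ]] := h2_row E2.
  rewrite E in E'; case: E' => ?; subst P'.
  congr (Some (_, _)); apply/ffunP => l.
  by rewrite ffunE HQ.
Qed.

End Decomp.

Lemma card_setsum (T : finType) (P : pred T) : #|[set x | P x]| = \sum_x P x.
Proof.
rewrite -sum1_card big_mkcond; apply: eq_bigr => x _; rewrite inE.
by case: (P x).
Qed.

Lemma sum_ind n x (F : nat -> nat) :
  \sum_(1 <= j < n.+1) ((x == j) * F j) = ((0 < x) && (x <= n)) * F x.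
Proof.
case: (boolP ((0 < x) && (x <= n))) => H.
  rewrite (bigD1_seq x) /= ?eqxx ?mul1n ?iota_uniq //; last first.
    by rewrite mem_iota; case/andP: H => a b; rewrite a /=; lia.
  rewrite big1_seq ?addn0 // => j /andP [jx _].
  by rewrite eq_sym (negbTE jx).
rewrite mul0n big1_seq // => j /andP [_]; rewrite mem_iota => jr.
case: eqP => [ej|]; last by rewrite mul0n.
by move: H; rewrite ej; case/andP: jr => a b; move/negP; case; apply/andP; split; lia.
Qed.

Lemma count_pairs (A B : finType) (P1 : pred A) (P2 : pred B) (f : A -> nat) (g : B -> nat) n :
   #|[set y : A * B | [&& P1 y.1, P2 y.2, 0 < f y.1 & f y.1 + g y.2 == n]]| =
   \sum_(1 <= j < n.+1) #|[set a | P1 a && (f a == j)]| * #|[set b | P2 b && (g b == n - j)]|.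
Proof.
rewrite card_setsum -(pair_big predT predT (fun a b => [&& P1 (a, b).1, P2 (a, b).2, 0 < f (a, b).1 & f (a, b).1 + g (a, b).2 == n] : nat)) /=.
symmetry.
under eq_bigr => j _ do rewrite !card_setsum big_distrl /=.
under eq_bigr => j _ do under eq_bigr => a _ do rewrite big_distrr /=.
rewrite exchange_big /=; apply: eq_bigr => a _.
rewrite exchange_big /=; apply: eq_bigr => b _.
symmetry.
have -> : \sum_(1 <= i < n.+1) ((P1 a && (f a == i)) * (P2 b && (g b == n - i)))
   = \sum_(1 <= i < n.+1) ((f a == i) * ((P1 a && P2 b) * (g b == n - i))).
  apply: eq_bigr => j _; rewrite -!mulnb.
  by rewrite [P1 a * _]mulnC -!mulnA.
rewrite sum_ind.
case: (P1 a); case: (P2 b) => //=; rewrite ?mul0n ?muln0 //.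
rewrite mul1n mulnb; congr nat_of_bool.
apply/idP/idP.
  by case/andP => h1 /eqP h3; apply/andP; split; [apply/andP; split => //; lia | apply/eqP; lia].
by case/andP => /andP [h1 h2] /eqP h3; apply/andP; split => //; apply/eqP; lia.
Qed.

Lemma fiber_card D k p' (Dpos : 0 < D) (T : {set 'I_p'}) n :
  #|[set h : Hs D.+1 k p'.+1 | [&& good h, Tset h == T & nrows h == n]]| =
  k * \sum_(1 <= j < n.+1) NN j D 1 #|T| * NN (n - j) D.+1 k #|~: T|.
Proof.
pose Dom := [set x : 'I_k * (Hs D 1 #|T| * Hs D.+1 k #|~: T|) |
   [&& good x.2.1, good x.2.2, 0 < nrows x.2.1 & nrows x.2.1 + nrows x.2.2 == n]].
have -> : [set h : Hs D.+1 k p'.+1 | [&& good h, Tset h == T & nrows h == n]] =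
   (fun x => Psi x.1 x.2.1 x.2.2) @: Dom.
  apply/setP => h; rewrite inE; apply/idP/imsetP.
    case/and3P => g /eqP eT /eqP hn; subst T.
    have [b eb] := Psi_decomp Dpos g.
    exists (b, (h1d h, h2d h)) => /=; last by rewrite eb.
    rewrite inE /= (good_h1 Dpos g) (good_h2 Dpos g) (h1_pos Dpos g) /=.
    by rewrite -(Psi_nrows b) eb hn.
  case=> [[b [h1 h2]]]; rewrite inE /= => /and4P [g1 g2 n1 /eqP hn] ->.
  by rewrite Psi_good // Psi_Tset // Psi_nrows hn !eqxx.
rewrite card_in_imset; last first.
  move=> [b [h1 h2]] [b' [h1' h2']]; rewrite inE /= => /and4P [_ _ n1 _] _ /=.
  exact: Psi_inj.
have -> : Dom = setX [set: 'I_k] [set y : Hs D 1 #|T| * Hs D.+1 k #|~: T| |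
   [&& good y.1, good y.2, 0 < nrows y.1 & nrows y.1 + nrows y.2 == n]].
  by apply/setP => [[b y]]; rewrite !inE.
rewrite cardsX cardsT card_ord (count_pairs (fun y : Hs D 1 #|T| => good y)).
by [].
Qed.

Lemma sum_const_pred (T : finType) (P : pred T) c : \sum_(x | P x) c = #|[set x | P x]| * c.
Proof.
rewrite card_setsum big_distrl /= big_mkcond; apply: eq_bigr => x _.
by case: (P x); rewrite ?mul1n ?mul0n.
Qed.

Lemma NN_rec D k p' n (Dpos : 0 < D) :
 NN n D.+1 k p'.+1 = \sum_(i < p'.+1) 'C(p', i) *
    (k * \sum_(1 <= j < n.+1) NN j D 1 i * NN (n - j) D.+1 k (p' - i)).
Proof.
have -> : NN n D.+1 k p'.+1 = \sum_(T : {set 'I_p'}) #|[set h : Hs D.+1 k p'.+1 | [&& good h, Tset h == T & nrows h == n]]|.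
  rewrite /NN card_setsum (partition_big (fun h => Tset h) predT) //=.
  apply: eq_bigr => T _; rewrite card_setsum big_mkcond /=; apply: eq_bigr => h _.
  by case: (Tset h == T); rewrite ?andbT ?andbF.
have cl (T : {set 'I_p'}) : #|T| < p'.+1 by apply: leq_ltn_trans (max_card T) _; rewrite card_ord.
rewrite (partition_big (fun T : {set 'I_p'} => Ordinal (cl T)) predT) //=.
apply: eq_bigr => i _.
transitivity (\sum_(T : {set 'I_p'} | #|T| == i) (k * \sum_(1 <= j < n.+1) NN j D 1 i * NN (n - j) D.+1 k (p' - i))).
  apply: eq_big => [T|T /eqP eT]; first by rewrite -val_eqE.
  rewrite fiber_card //; have eT' : #|T| = i by rewrite -eT.
  by rewrite eT' [#|~: T|](cardsCs (~: T)) setCK card_ord eT'.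
by rewrite sum_const_pred card_draws card_ord.
Qed.

Lemma ord0_absurd (x : 'I_0) : False.
Proof. by case: x. Qed.

Definition incr n k (Y : {ffun 'I_n -> 'I_k}) :=
  [forall i : 'I_n, forall i' : 'I_n, (i < i') ==> (Y i < Y i')].

Lemma isCR_d0 n k (c : CRcand n 0 k) : is_CR c = incr c.1.
Proof.
rewrite /is_CR /total_preorder /cr_cond1 /=.
have F1 : forall P : pred (CRidx n 0), [forall x, P x].
  by move=> P; apply/forallP => -[i l]; case: (ord0_absurd l).
rewrite !F1 /=.
have -> : cr_cond2 c.
  by apply/forallP => i; apply/forallP => i'; apply/forallP => j; case: (ord0_absurd j).
have -> : cr_cond3 c.
  by apply/forallP => i; apply/forallP => j; case: (ord0_absurd j).
have -> : cr_cond4 c.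
  by apply/forallP => i; apply/forallP => i'; apply/forallP => j; case: (ord0_absurd j).
have -> : cr_cond5 c.
  by apply/forallP => i; apply/forallP => i'; apply/forallP => j; case: (ord0_absurd j).
by rewrite !andbT.
Qed.

Lemma crsize_empty n d k (c : CRcand n d k) : (n = 0 \/ d = 0) -> cr_size c = 0.
Proof.
move=> nd; rewrite /cr_size; apply/eqP; rewrite cards_eq0; apply/eqP/setP => s.
rewrite in_set0; apply/negP => /imsetP [[i l] _ _].
case: nd => e; subst; [exact: ord0_absurd i | exact: ord0_absurd l].
Qed.

Lemma isCR_n0 d k (c : CRcand 0 d k) : is_CR c.
Proof.
have F1 : forall P : pred (CRidx 0 d), [forall x, P x].
  by move=> P; apply/forallP => -[i l]; case: (ord0_absurd i).
have F2 : forall P : pred 'I_0, [forall x, P x].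
  by move=> P; apply/forallP => i; case: (ord0_absurd i).
rewrite /is_CR /total_preorder /cr_cond1 /cr_cond2 /cr_cond3 /cr_cond4 /cr_cond5 !F1 !F2.
by case: ifP.
Qed.

Lemma Pcount_n0 p d k : Pcount p 0 d k = (p == 0).
Proof.
rewrite /Pcount.
case: eqP => [->|p0].
  transitivity #|[set: CRcand 0 d k]|.
    apply: eq_card => c; rewrite !inE isCR_n0 crsize_empty //; by left.
  by rewrite cardsT /CRcand card_prod !card_ffun /CRidx !card_prod !card_ord !mul0n.
suff -> : [set c : CRcand 0 d k | is_CR c && (cr_size c == p)] = set0 by rewrite cards0.
apply/setP => c; rewrite !inE.
rewrite crsize_empty; last by left.
by rewrite eq_sym (introF eqP p0) andbF.
Qed.

Lemma Pcount_d0 p n k : Pcount p n 0 k = (p == 0) * #|[set Y : {ffun 'I_n -> 'I_k} | incr Y]|.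
Proof.
rewrite /Pcount.
case: eqP => [->|p0]; last first.
  suff -> : [set c : CRcand n 0 k | is_CR c && (cr_size c == p)] = set0 by rewrite cards0.
  apply/setP => c; rewrite !inE.
  rewrite crsize_empty; last by right.
  by rewrite eq_sym (introF eqP p0) andbF.
rewrite mul1n.
have -> : [set c : CRcand n 0 k | is_CR c && (cr_size c == 0)] =
   setX [set Y | incr Y] [set: {ffun CRidx n 0 * CRidx n 0 -> bool}].
  apply/setP => -[Y R]; rewrite !inE isCR_d0 crsize_empty ?eqxx ?andbT //; by right.
rewrite cardsX cardsT card_ffun /CRidx !card_prod !card_ord.
by rewrite !muln0 expn0 muln1.
Qed.

Lemma incr_inj n k (Y : {ffun 'I_n -> 'I_k}) : incr Y -> injective Y.
Proof.
move=> H i i' e; case: (ltngtP i i') => [ii|ii|/val_inj //].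
  by move/forallP: H => /(_ i) /forallP /(_ i') /implyP /(_ ii); rewrite e ltnn.
by move/forallP: H => /(_ i') /forallP /(_ i) /implyP /(_ ii); rewrite e ltnn.
Qed.

Lemma card_incr n k : #|[set Y : {ffun 'I_n -> 'I_k} | incr Y]| = 'C(k, n).
Proof.
rewrite -(card_ltn_sorted_tuples n k).
pose phi (t : n.-tuple 'I_k) : {ffun 'I_n -> 'I_k} := [ffun i => tnth t i].
have phi_inj : injective phi.
  move=> t t' /ffunP e; apply: eq_from_tnth => i; have := e i; by rewrite !ffunE.
have sz (t : n.-tuple 'I_k) : size (map val t) = n by rewrite size_map size_tuple.
have -> : [set Y : {ffun 'I_n -> 'I_k} | incr Y] = phi @: [set t : n.-tuple 'I_k | sorted ltn (map val t)].
  apply/setP => Y; rewrite inE; apply/idP/imsetP => [H|[t]].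
    exists [tuple Y i | i < n].
      rewrite inE; apply/(sortedP 0) => i; rewrite sz => ilt.
      have il : i < n by apply: ltn_trans ilt.
      rewrite (nth_map (Y (Ordinal il)) 0) ?size_tuple // (nth_map (Y (Ordinal il)) 0) ?size_tuple //.
      rewrite -[i.+1]/(val (Ordinal ilt)) nth_mktuple -[i]/(val (Ordinal il)) nth_mktuple.
      by move/forallP: H => /(_ (Ordinal il)) /forallP /(_ (Ordinal ilt)) /implyP /(_ (ltnSn i)).
    by apply/ffunP => i; rewrite ffunE tnth_mktuple.
  rewrite inE => st ->; apply/forallP => i; apply/forallP => i'; apply/implyP => ii.
  rewrite !ffunE.
  have := sorted_ltn_nth ltn_trans 0 st; rewrite sz => /(_ i i').
  rewrite !inE !ltn_ord => /(_ isT isT ii).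
  by rewrite !(nth_map (tnth t i) 0) ?size_tuple // -!(tnth_nth (tnth t i)).
by rewrite card_imset.
Qed.

Lemma NN_p0 n d k : 0 < n -> NN n d k 0 = 0.
Proof.
move=> n0; rewrite /NN; suff -> : [set h : Hs d k 0 | good h && (nrows h == n)] = set0 by rewrite cards0.
apply/setP => h; rewrite !inE; apply/negbTE/negP => /andP [_ /eqP e].
have : nrows h <= #|'I_0| by apply: max_card.
by rewrite card_ord e leqn0 => /eqP n00; rewrite n00 in n0.
Qed.

Theorem lemma9p1 (n d k p : nat) :
  (d = 0 -> k < n -> Pcount p n d k = 0) /\
  (n = 0 -> p = 0 -> Pcount p n d k = 1) /\
  (n = 0 -> 1 <= p -> Pcount p n d k = 0) /\
  (d = 0 -> 1 <= n <= k -> p = 0 -> Pcount p n d k = 'C(k, n)) /\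
  (d = 0 -> 1 <= n <= k -> 1 <= p -> Pcount p n d k = 0) /\
  (d = 1 -> 1 <= n -> n = p -> Pcount p n d k = k ^ n) /\
  (d = 1 -> 1 <= n -> n <> p -> Pcount p n d k = 0) /\
  (2 <= d -> 1 <= n -> p = 0 -> Pcount p n d k = 0) /\
  (2 <= d -> 1 <= n -> 1 <= p ->
     Pcount p n d k =
       k * \sum_(1 <= j < n.+1) \sum_(0 <= i < p)
             'C(p.-1, i) * Pcount i j d.-1 1 * Pcount (p.-1 - i) (n - j) d k).
Proof.
split; [|split; [|split; [|split; [|split; [|split; [|split; [|split]]]]]]].
- move=> -> kn; rewrite Pcount_d0 card_incr bin_small // muln0 //.
- by move=> -> ->; rewrite Pcount_n0.
- by move=> -> p1; rewrite Pcount_n0; case: p p1.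
- by move=> -> _ ->; rewrite Pcount_d0 card_incr mul1n.
- by move=> -> _ p1; rewrite Pcount_d0; case: p p1.
- by move=> -> _ <-; rewrite (Pcount_NN n 0 k n) NN_d1 eqxx.
- move=> -> _ np; rewrite (Pcount_NN n 0 k p) NN_d1.
  by case: eqP.
- case: d => [|[|D]] // _ n1 ->.
  by rewrite (Pcount_NN n D.+1 k 0) NN_p0.
- case: d => [|[|D]] // _ n1; case: p => [|p'] // _.
  rewrite (Pcount_NN n D.+1 k p'.+1) (NN_rec _ _ _ (ltn0Sn D)) /=.
  under eq_bigr => i _ do rewrite mulnCA big_distrr /=.
  rewrite -big_distrr /=; congr (k * _).
  rewrite exchange_big /=; apply: eq_bigr => j _.
  rewrite big_mkord; apply: eq_bigr => i _.
  by rewrite (Pcount_NN j D 1 i) (Pcount_NN (n - j) D.+1 k (p' - i)) mulnA.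
Qed.
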